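(* Let $E$ be a topological vector space with a fundamental sequence of bounded sets. If $E$ has property (PS), then $E$ has countable $cs^\ast$-character.
   Context: A fundamental sequence of bounded sets is a sequence $(B_n)$ of bounded sets such that every bounded set lies in some $B_n$. A topological (additive) group has property (PS) if for every sequence $(g_n)$ converging to $0$ there are strictly increasing sequences $(m_k),(n_k)$ of natural numbers with $m_kg_{n_k}\to0$. A family $\mathcal{N}$ of subsets of $X$ is a $cs^\ast$-network at $x$ if for each sequence $(x_n)$ converging to $x$ and each neighborhood $O_x$ of $x$ there is $N\in\mathcal{N}$ with $x\in N\subseteq O_x$ and $\{n:x_n\in N\}$ infinite; the $cs^\ast$-character of $X$ is the supremum over $x\in X$ of the least cardinality of a $cs^\ast$-network at $x$. *)

(* Defs.v *)
From Stdlib Require Import Reals.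
Open Scope R_scope.

(** No separation axiom. *)
Record TVS := {
  carrier :> Type;
  vadd : carrier -> carrier -> carrier;
  vopp : carrier -> carrier;
  vzero : carrier;
  vscal : R -> carrier -> carrier;
  vadd_assoc : forall x y z, vadd x (vadd y z) = vadd (vadd x y) z;
  vadd_comm : forall x y, vadd x y = vadd y x;
  vadd_0 : forall x, vadd x vzero = x;
  vadd_opp : forall x, vadd x (vopp x) = vzero;
  vscal_assoc : forall a b x, vscal a (vscal b x) = vscal (a * b) x;
  vscal_1 : forall x, vscal 1 x = x;
  vscal_distr_v : forall a x y, vscal a (vadd x y) = vadd (vscal a x) (vscal a y);
  vscal_distr_s : forall a b x, vscal (a + b) x = vadd (vscal a x) (vscal b x);
  is_open : (carrier -> Prop) -> Prop;
  open_full : is_open (fun _ => True);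
  open_inter : forall U V, is_open U -> is_open V -> is_open (fun x => U x /\ V x);
  open_union : forall (F : (carrier -> Prop) -> Prop),
      (forall U, F U -> is_open U) -> is_open (fun x => exists U, F U /\ U x);
  vadd_cont : forall x y W, is_open W -> W (vadd x y) ->
      exists U V, is_open U /\ is_open V /\ U x /\ V y /\
        (forall u v, U u -> V v -> W (vadd u v));
  vscal_cont : forall a x W, is_open W -> W (vscal a x) ->
      exists eps U, eps > 0 /\ is_open U /\ U x /\
        (forall b u, Rabs (b - a) < eps -> U u -> W (vscal b u))
}.

Section Defs.
Variable E : TVS.

Definition nbhd (x : E) (O : E -> Prop) : Prop :=
  exists U, is_open E U /\ U x /\ (forall y, U y -> O y).

Definition converges (s : nat -> E) (x : E) : Prop :=
  forall O, nbhd x O -> exists N, forall n, (n >= N)%nat -> O (s n).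

Definition bounded (B : E -> Prop) : Prop :=
  forall V, nbhd (vzero E) V ->
    exists s, s > 0 /\ forall t, t > s -> forall b, B b ->
      exists v, V v /\ b = vscal E t v.

Definition subset (A B : E -> Prop) : Prop := forall x, A x -> B x.

Definition fundamental_bounded_seq (B : nat -> E -> Prop) : Prop :=
  (forall n, bounded (B n)) /\
  (forall A, bounded A -> exists n, subset A (B n)).

Definition has_fundamental_bounded_seq : Prop :=
  exists B, fundamental_bounded_seq B.

Definition strictly_increasing (m : nat -> nat) : Prop :=
  forall k, (m k < m (S k))%nat.

Definition property_PS : Prop :=
  forall g : nat -> E, converges g (vzero E) ->
    exists m n : nat -> nat, strictly_increasing m /\ strictly_increasing n /\
      converges (fun k => vscal E (INR (m k)) (g (n k))) (vzero E).

Definition cs_star_network_at (x : E) (N : (E -> Prop) -> Prop) : Prop :=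
  forall (s : nat -> E) (O : E -> Prop), converges s x -> nbhd x O ->
    exists A, N A /\ A x /\ subset A O /\
      (forall M, exists n, (n >= M)%nat /\ A (s n)).

Definition countable_family (N : (E -> Prop) -> Prop) : Prop :=
  exists f : nat -> (E -> Prop), forall A, N A -> exists n, A = f n.

Definition countable_cs_star_character : Prop :=
  forall x : E, exists N, countable_family N /\ cs_star_network_at x N.

End Defs.

(* Main.v *)
Require Import Defs.
From Stdlib Require Import Reals.
From Stdlib Require Import Lra Lia Cantor.

Section Aux.
Variable E : TVS.

Lemma vscal0 (z : E) : vscal E 0 z = vzero E.
Proof.
  assert (H : vscal E 0 z = vadd E (vscal E 0 z) (vscal E 0 z)).
  { rewrite <- vscal_distr_s. f_equal. ring. }
  assert (H2 : vadd E (vscal E 0 z) (vopp E (vscal E 0 z)) =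
               vadd E (vadd E (vscal E 0 z) (vscal E 0 z)) (vopp E (vscal E 0 z))).
  { rewrite <- H. reflexivity. }
  rewrite <- vadd_assoc, vadd_opp, vadd_0 in H2. congruence.
Qed.

Lemma vscal_inv (t : R) (z : E) : t <> 0 -> vscal E t (vscal E (/ t) z) = z.
Proof. intros. rewrite vscal_assoc, Rinv_r by auto. apply vscal_1. Qed.

Lemma vscal_inv' (t : R) (z : E) : t <> 0 -> vscal E (/ t) (vscal E t z) = z.
Proof. intros. rewrite vscal_assoc, Rinv_l by auto. apply vscal_1. Qed.

Lemma sub_add (y x : E) : vadd E (vadd E y (vopp E x)) x = y.
Proof.
  rewrite <- vadd_assoc, (vadd_comm E (vopp E x) x), vadd_opp. apply vadd_0.
Qed.

Lemma finite_bound (h : nat -> E) (U : E -> Prop) : is_open E U -> U (vzero E) ->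
  forall N, exists s, s > 0 /\ forall k, (k < N)%nat -> forall t, t > s ->
     U (vscal E (/ t) (h k)).
Proof.
  intros HU HU0 N. induction N as [|N [s [Hs IH]]].
  - exists 1. split; [lra|]. intros; lia.
  - assert (HW : U (vscal E 0 (h N))) by (rewrite vscal0; auto).
    destruct (vscal_cont E 0 (h N) U HU HW) as [eps [U' [Heps [_ [HU' Hc]]]]].
    exists (Rmax s (/ eps)). split.
    + apply Rlt_le_trans with s; auto. apply Rmax_l.
    + intros k Hk t Ht.
      assert (Hts : t > s) by (apply Rle_lt_trans with (Rmax s (/eps)); auto; apply Rmax_l).
      destruct (Nat.eq_dec k N) as [->|Hne].
      * apply Hc; auto.
        assert (Hte : t > / eps) by (apply Rle_lt_trans with (Rmax s (/eps)); auto; apply Rmax_r).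
        assert (Hie : / eps > 0) by (apply Rinv_0_lt_compat; auto).
        rewrite Rminus_0_r, Rabs_pos_eq.
        -- rewrite <- (Rinv_inv eps). apply Rinv_lt_contravar; auto.
           apply Rmult_lt_0_compat; lra.
        -- left. apply Rinv_0_lt_compat. lra.
      * apply IH; auto. lia.
Qed.

Lemma conv_bounded (h : nat -> E) : converges E h (vzero E) ->
  Defs.bounded E (fun y => exists k, y = h k).
Proof.
  intros Hh V [U [HU [HU0 HUV]]].
  assert (HW : U (vscal E 0 (vzero E))) by (rewrite vscal0; auto).
  destruct (vscal_cont E 0 (vzero E) U HU HW) as [eps [U' [Heps [HU'o [HU' Hc]]]]].
  destruct (Hh U') as [N HN].
  { exists U'. repeat split; auto. }
  destruct (finite_bound h U HU HU0 N) as [s [Hs Hf]].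
  exists (Rmax s (/ eps)). split.
  { apply Rlt_le_trans with s; auto. apply Rmax_l. }
  intros t Ht b [k ->].
  assert (Hts : t > s) by (apply Rle_lt_trans with (Rmax s (/eps)); auto; apply Rmax_l).
  assert (Htp : t <> 0) by lra.
  exists (vscal E (/ t) (h k)). split.
  - apply HUV. destruct (Compare_dec.le_lt_dec N k) as [Hk|Hk].
    + apply Hc; auto.
      assert (Hte : t > / eps) by (apply Rle_lt_trans with (Rmax s (/eps)); auto; apply Rmax_r).
      assert (Hie : / eps > 0) by (apply Rinv_0_lt_compat; auto).
      rewrite Rminus_0_r, Rabs_pos_eq.
      * rewrite <- (Rinv_inv eps). apply Rinv_lt_contravar; auto.
        apply Rmult_lt_0_compat; lra.
      * left. apply Rinv_0_lt_compat. lra.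
    + apply Hf; auto.
  - rewrite vscal_inv; auto.
Qed.

Lemma strict_ge (m : nat -> nat) : strictly_increasing m -> forall k, (k <= m k)%nat.
Proof.
  intros Hm k. induction k; [lia|]. specialize (Hm k). lia.
Qed.

Definition Aset (B : nat -> E -> Prop) (x : E) (a M : nat) : E -> Prop :=
  fun y => y = x \/ exists m, (m >= M)%nat /\ B a (vscal E (INR m) (vadd E y (vopp E x))).

End Aux.

Theorem mainTheorem13 (E : TVS) :
  has_fundamental_bounded_seq E -> property_PS E -> countable_cs_star_character E.
Proof.
  intros [B [HBb HBf]] HPS x.
  exists (fun A => exists a M, A = Aset E B x a M). split.
  - exists (fun p => Aset E B x (fst (of_nat p)) (snd (of_nat p))).
    intros A [a [M ->]]. exists (to_nat (a, M)). rewrite cancel_of_to. reflexivity.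
  - intros s O Hs [U [HUo [HUx HUO]]].
    set (g := fun k => vadd E (s k) (vopp E x)).
    assert (Hg : converges E g (vzero E)).
    { intros O' [U' [HU'o [HU'0 HU'O]]].
      assert (HW : U' (vadd E x (vopp E x))) by (rewrite vadd_opp; auto).
      destruct (vadd_cont E x (vopp E x) U' HU'o HW) as [U1 [V1 [HU1 [HV1 [HU1x [HV1x Hc]]]]]].
      destruct (Hs U1) as [N HN]. { exists U1. repeat split; auto. }
      exists N. intros n Hn. apply HU'O. unfold g. apply Hc; auto. }
    destruct (HPS g Hg) as [m [n [Hm [Hn Hconv]]]].
    destruct (HBf _ (conv_bounded E _ Hconv)) as [a Ha].
    assert (HW : U (vadd E (vzero E) x)).
    { rewrite vadd_comm, vadd_0. auto. }
    destruct (vadd_cont E (vzero E) x U HUo HW) as [U1 [V1 [HU1 [HV1 [HU10 [HV1x Hc]]]]]].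
    destruct (HBb a (fun z => O (vadd E z x))) as [r [Hr Hbd]].
    { exists U1. split; [auto|split; [auto|]]. intros y Hy. apply HUO. apply Hc; auto. }
    destruct (INR_unbounded r) as [M HM].
    exists (Aset E B x a M). split; [eauto|]. split; [left; reflexivity|]. split.
    + intros y [->|[k [Hk HB]]].
      * apply HUO; auto.
      * assert (HkM : INR k >= INR M) by (apply Rle_ge, le_INR; lia).
        destruct (Hbd (INR k) ltac:(lra) _ HB) as [v [Hv Heq]].
        assert (Hk0 : INR k <> 0) by lra.
        assert (Hyv : vadd E y (vopp E x) = v).
        { rewrite <- (vscal_inv' E (INR k) (vadd E y (vopp E x))) by auto.
          rewrite Heq. apply vscal_inv'; auto. }
        rewrite <- (sub_add E y x), Hyv. auto.
    + intros M'. exists (n (max M M')). split.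
      * pose proof (strict_ge n Hn (max M M')). lia.
      * right. exists (m (max M M')). split.
        -- pose proof (strict_ge m Hm (max M M')). lia.
        -- apply Ha. exists (max M M'). reflexivity.
Qed.
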